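(* Let $\mathcal{G}=(\mathcal{V},\mathcal{E},\mathcal{W})$ be a connected, simple, undirected graph with vertex set $\mathcal{V}=\{1,\dots,n\}$, edge set $\mathcal{E}=\{e_1,\dots,e_m\}$ and positive edge weights $w_1,\dots,w_m$, each edge being given an arbitrary but fixed orientation. Let $D$ be its $n\times m$ incidence matrix, $W=\mathrm{diag}(w_1,\dots,w_m)$, $Q=DW^{-1}$, and for two distinct vertices $s,t$ let $y=y^{(s,t)}\in\mathbb{R}^n$ be the vector with $y(s)=+1$, $y(t)=-1$ and all other entries $0$. Assume (Assumption A1) that for every vertex $v$, the shortest (minimum total weight) path between $s$ and $v$ is unique and the shortest path between $t$ and $v$ is unique. Then for every $\lambda>0$ the lasso problem $$\min_{\beta\in\mathbb{R}^m}\ \tfrac12\|y-Q\beta\|_2^2+\lambda\|\beta\|_1$$ has a unique solution.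
   Context: The incidence matrix $D$ has entries $[D]_{ij}=+1$ if vertex $i$ is the tail of edge $e_j$, $-1$ if vertex $i$ is the head of edge $e_j$, and $0$ otherwise. The length of a path is the sum of the weights of its edges. *)

(* Defs.v *)
From HB Require Import structures.
From mathcomp Require Import all_boot all_order all_algebra.
From mathcomp Require Import reals.
Set Implicit Arguments. Unset Strict Implicit. Unset Printing Implicit Defensive.
Import Order.TTheory GRing.Theory Num.Theory.
Local Open Scope ring_scope.

(* A graph on vertices 'I_n with m edges; edge j is oriented from tl j (tail)
   to hd j (head). *)
Section Graph.
Variables (R : realType) (n m : nat) (tl hd : 'I_m -> 'I_n) (w : 'I_m -> R).

Definition joins (j : 'I_m) (u v : 'I_n) : bool :=
  ((tl j == u) && (hd j == v)) || ((tl j == v) && (hd j == u)).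

Definition simple_graph : Prop :=
  (forall j, tl j != hd j) /\
  (forall j k, j != k -> ~~ joins k (tl j) (hd j)).

Definition adj : rel 'I_n := fun u v => [exists j, joins j u v].

(* p is a (simple) path from u to v, given by its vertex sequence u :: p *)
Definition is_path (u v : 'I_n) (p : seq 'I_n) : bool :=
  [&& path adj u p, uniq (u :: p) & last u p == v].

Definition connected_graph : Prop :=
  forall u v : 'I_n, exists p, is_path u v p.

(* weight of the edge between u and v (graph simple: at most one such edge) *)
Definition edge_weight (u v : 'I_n) : R := \sum_(j | joins j u v) w j.

Definition path_length (u : 'I_n) (p : seq 'I_n) : R :=
  \sum_(e <- zip (u :: p) p) edge_weight e.1 e.2.

Definition shortest_path (u v : 'I_n) (p : seq 'I_n) : Prop :=
  is_path u v p /\ forall q, is_path u v q -> path_length u p <= path_length u q.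

Definition unique_shortest_path (u v : 'I_n) : Prop :=
  exists! p, shortest_path u v p.

Definition assumption_A1 (s t : 'I_n) : Prop :=
  forall v : 'I_n, unique_shortest_path s v /\ unique_shortest_path t v.

Definition incidence : 'M[R]_(n, m) :=
  \matrix_(i, j) ((i == tl j)%:R - (i == hd j)%:R).

Definition Wmx : 'M[R]_m := diag_mx (\row_j w j).

Definition Qmx : 'M[R]_(n, m) := incidence *m invmx Wmx.

Definition yvec (s t : 'I_n) : 'cV[R]_n :=
  \col_i ((i == s)%:R - (i == t)%:R).

Definition lasso_obj (y : 'cV[R]_n) (lambda : R) (b : 'cV[R]_m) : R :=
  2^-1 * (\sum_i (y - Qmx *m b) i 0 ^+ 2) + lambda * \sum_j `|b j 0|.

End Graph.

(* Main.v *)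
Require Import Defs.
From HB Require Import structures.
From mathcomp Require Import all_boot all_order all_algebra.
From mathcomp Require Import reals.
From mathcomp Require Import ring lra.
From mathcomp Require Import all_classical.
From mathcomp Require Import topology normedtype derive realfun.
Set Implicit Arguments. Unset Strict Implicit. Unset Printing Implicit Defensive.
Import Order.TTheory GRing.Theory Num.Theory.
Import numFieldNormedType.Exports.
Local Open Scope ring_scope.

Section GraphLemmas.
Variables (R : realType) (n m : nat) (tl hd : 'I_m -> 'I_n) (w : 'I_m -> R).
Hypothesis Hsimple : simple_graph tl hd.
Hypothesis Hw : forall j, 0 < w j.

Local Notation J := (joins tl hd).
Local Notation ew := (edge_weight tl hd w).
Local Notation plen := (path_length tl hd w).
Local Notation ispath := (is_path tl hd).
Local Notation sp := (shortest_path tl hd w).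

Lemma joinsC j u v : J j u v = J j v u.
Proof. by rewrite /joins orbC. Qed.

Lemma joins_uniq j k u v : J j u v -> J k u v -> j = k.
Proof.
move=> Hj Hk; apply/eqP; apply/negPn/negP => /(Hsimple.2 j k) Hn.
move: Hj; rewrite /joins => /orP[/andP[/eqP Ht /eqP Hh]|/andP[/eqP Ht /eqP Hh]].
  by move: Hn; rewrite Ht Hh Hk.
by move: Hn; rewrite Ht Hh joinsC Hk.
Qed.

Lemma ew_joins j u v : J j u v -> ew u v = w j.
Proof.
move=> Hj; rewrite /edge_weight (bigD1 j) //= big1 ?addr0 // => k /andP[Hk kj].
by move: kj; rewrite (joins_uniq Hj Hk) eqxx.
Qed.

Lemma ew_ge0 u v : 0 <= ew u v.
Proof. by apply: sumr_ge0 => j _; exact: ltW. Qed.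

Lemma plen_nil u : plen u [::] = 0.
Proof. by rewrite /path_length /= big_nil. Qed.

Lemma plen_cons u v p : plen u (v :: p) = ew u v + plen v p.
Proof. by rewrite /path_length /= big_cons. Qed.

Lemma plen_cat u p q : plen u (p ++ q) = plen u p + plen (last u p) q.
Proof.
elim: p u => [|v p IH] u /=; first by rewrite plen_nil add0r.
by rewrite !plen_cons IH addrA.
Qed.

Lemma plen_ge0 u p : 0 <= plen u p.
Proof.
elim: p u => [|v p IH] u; first by rewrite plen_nil.
by rewrite plen_cons addr_ge0 // ew_ge0.
Qed.

Lemma ispath_nil u : ispath u u [::].
Proof. by rewrite /is_path /= eqxx. Qed.

Lemma prefix_path u v p b : ispath u v p -> b \in u :: p ->
  exists p1, ispath u b p1 /\ plen u p1 <= plen u p.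
Proof.
move=> Hp; rewrite inE => /orP[/eqP ->|bp].
  by exists [::]; split; [exact: ispath_nil | rewrite plen_nil plen_ge0].
move: Hp; case/splitPr: bp => p1 p2.
rewrite /is_path => /and3P[Hpa Hu _].
exists (rcons p1 b); split.
  move: Hpa Hu; rewrite -cat_rcons cat_path => /andP[-> _].
  rewrite -cat_cons cat_uniq => /andP[-> _].
  by rewrite last_rcons eqxx.
by rewrite -cat_rcons plen_cat lerDl plen_ge0.
Qed.

Lemma rcons_ispath u a p j b : ispath u a p -> J j a b -> b \notin u :: p ->
  ispath u b (rcons p b) /\ plen u (rcons p b) = plen u p + w j.
Proof.
rewrite /is_path => /and3P[Hpa Hu /eqP Hl] Hj Hb; split.
  rewrite rcons_path Hpa Hl -rcons_cons rcons_uniq Hb Hu last_rcons eqxx /=.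
  by rewrite andbT; apply/existsP; exists j.
by rewrite -cats1 plen_cat plen_cons plen_nil addr0 Hl (ew_joins Hj).
Qed.

Lemma ispath_last u v p : ispath u v p -> last u p = v.
Proof. by rewrite /is_path => /and3P[_ _ /eqP]. Qed.

Section Dist.
Variables (x : 'I_n) (P : 'I_n -> seq 'I_n).
Hypothesis HP : forall v, sp x v (P v).
Hypothesis HU : forall v, unique_shortest_path tl hd w x v.

Definition dist v := plen x (P v).

Lemma dist_le v q : ispath x v q -> dist v <= plen x q.
Proof. by move=> Hq; exact: (HP v).2. Qed.

Lemma dist_ge0 v : 0 <= dist v.
Proof. exact: plen_ge0. Qed.

Lemma dist_root : dist x = 0.
Proof.
apply/le_anti; rewrite dist_ge0 andbT.
by rewrite -(plen_nil x); apply: dist_le; exact: ispath_nil.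
Qed.

Lemma dist_tri j a b : J j a b -> dist b <= dist a + w j.
Proof.
move=> Hj; have Ha := (HP a).1.
case: (boolP (b \in x :: P a)) => Hb.
  have [p1 [Hp1 Hl]] := prefix_path Ha Hb.
  apply: le_trans (dist_le Hp1) _; apply: le_trans Hl _.
  by rewrite lerDl ltW.
have [Hp Hl] := rcons_ispath Ha Hj Hb.
by rewrite -Hl; exact: dist_le.
Qed.

Lemma dist_par_path j a b : J j a b -> dist a + w j = dist b ->
  P b = rcons (P a) b.
Proof.
move=> Hj Hd; have Ha := (HP a).1.
have Hb : b \notin x :: P a.
  apply/negP => Hb; have [p1 [Hp1 Hl]] := prefix_path Ha Hb.
  have := dist_le Hp1; have := Hw j; rewrite /dist in Hd Hl *; lra.
have [Hp Hl] := rcons_ispath Ha Hj Hb.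
have Hsp : sp x b (rcons (P a) b).
  split => // q Hq; rewrite Hl; have := dist_le Hq; rewrite /dist in Hd *; lra.
case: (HU b) => p0 [_ Hu].
by rewrite -(Hu _ Hsp) (Hu _ (HP b)).
Qed.

Lemma dist_par j k a a' b : J j a b -> J k a' b ->
  dist a + w j = dist b -> dist a' + w k = dist b -> a = a'.
Proof.
move=> Hj Hk H1 H2.
have E0 := dist_par_path Hj H1; rewrite (dist_par_path Hk H2) in E0; have E : P a' = P a by apply: (@rcons_injl _ b).
have La : last x (P a) = a by apply: ispath_last; exact: (HP a).1.
have La2 : last x (P a') = a' by apply: ispath_last; exact: (HP a').1.
by rewrite -[LHS]La -[RHS]La2 E.
Qed.

Variables (rho : 'I_n -> R) (lam : R).
Hypothesis Hlam : 0 < lam.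
Hypothesis Hlip : forall j, `|rho (tl j) - rho (hd j)| <= lam * w j.

Lemma lip_joins j u v : J j u v -> `|rho u - rho v| <= lam * w j.
Proof.
rewrite /joins => /orP[/andP[/eqP <- /eqP <-]|/andP[/eqP <- /eqP <-]] //.
by rewrite distrC.
Qed.

Lemma lip_path p u : path (adj tl hd) u p -> `|rho u - rho (last u p)| <= lam * plen u p.
Proof.
elim: p u => [|v p IH] u /=; first by rewrite subrr normr0 plen_nil mulr0.
move=> /andP[/existsP[j Hj] Hp]; rewrite plen_cons (ew_joins Hj) mulrDr.
have := IH _ Hp; have := lip_joins Hj.
have E : rho u - rho (last v p) = (rho u - rho v) + (rho v - rho (last v p)) by ring.
rewrite E => h1 h2; apply: le_trans (ler_normD _ _) _; exact: lerD.
Qed.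

Lemma dist_lip v : rho x - rho v <= lam * dist v.
Proof.
have /and3P[Hp _ /eqP Hl] := (HP v).1.
have := lip_path Hp; rewrite Hl => h; apply: le_trans h; exact: ler_norm.
Qed.

Definition tightK v := rho x - rho v = lam * dist v.

Lemma tight_step k c a : tightK c -> J k c a -> rho c - rho a = lam * w k ->
  tightK a /\ dist a = dist c + w k.
Proof.
rewrite /tightK => Hc Hk Ht.
have H1 := dist_tri Hk; have H2 := dist_lip a.
have E : rho x - rho a = lam * (dist c + w k) by rewrite mulrDr -Hc -Ht; ring.
have H3 : lam * dist a <= lam * (dist c + w k) by rewrite ler_pM2l.
have H4 : lam * (dist c + w k) <= lam * dist a.
  by rewrite -E.
have : lam * dist a = lam * (dist c + w k) by apply/le_anti; rewrite H3 H4.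
move/(mulfI (lt0r_neq0 Hlam)) => Hd; split => //; by rewrite E Hd.
Qed.

Lemma tightK_root : tightK x.
Proof. by rewrite /tightK subrr dist_root mulr0. Qed.

End Dist.


Lemma ind_gt (f : 'I_n -> R) (Pr : 'I_n -> Prop) :
  (forall a, (forall c, f a < f c -> Pr c) -> Pr a) -> forall a, Pr a.
Proof.
move=> H.
suff : forall k a, leq #|[set c | f a < f c]| k -> Pr a by move=> S a; exact: (S _ a (leqnn _)).
elim=> [|k IH] a Ha; apply: H => c ac.
  have : c \in [set c | f a < f c] by rewrite inE.
  by move: Ha; rewrite leqn0 => /eqP/cards0_eq ->; rewrite inE.
apply: IH; rewrite -ltnS; apply: leq_trans Ha; apply: proper_card.
apply/fintype.properP; split.
  by apply/fintype.subsetP => x; rewrite !inE => /(lt_trans ac).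
by exists c; rewrite !inE ?ltxx.
Qed.

Lemma ind_lt (f : 'I_n -> R) (Pr : 'I_n -> Prop) :
  (forall a, (forall c, f c < f a -> Pr c) -> Pr a) -> forall a, Pr a.
Proof.
move=> H; apply: (@ind_gt (fun v => - f v)) => a IH; apply: H => c ca.
by apply: IH; rewrite ltrN2.
Qed.

Section Opt.
Variables (y : 'cV[R]_n) (lam : R).
Hypothesis Hlam : 0 < lam.

Local Notation Q := (Qmx tl hd w).
Local Notation f := (lasso_obj tl hd w y lam).
Definition Dm (v : 'I_n) (j : 'I_m) : R := (v == tl j)%:R - (v == hd j)%:R.

Lemma Qij i j : Q i j = Dm i j / w j.
Proof.
have H : Wmx w *m diag_mx (\row_j (w j)^-1) = 1%:M.
  rewrite /Wmx mul_diag_mx; apply/matrixP => a b; rewrite !mxE.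
  case: (eqVneq a b) => [->|ab]; first by rewrite mulr1n mulfV // lt0r_neq0.
  by rewrite mulr0n mulr0.
have [U _] := mulmx1_unit H.
have Winv : invmx (Wmx w) = diag_mx (\row_j (w j)^-1).
  by rewrite -[invmx _]mulmx1 -H mulmxA mulVmx ?mul1mx.
by rewrite /Qmx Winv mul_mx_diag !mxE.
Qed.

Lemma subE p q (A B : 'M[R]_(p, q)) i j : (A - B) i j = A i j - B i j.
Proof. by rewrite !mxE. Qed.

Lemma zE (b : 'cV[R]_m) v : (Q *m b) v 0 = \sum_k Dm v k * b k 0 / w k.
Proof. by rewrite mxE; apply: eq_bigr => k _; rewrite Qij; ring. Qed.

Lemma sum_ind (a : 'I_n) (F : 'I_n -> R) : \sum_i (i == a)%:R * F i = F a.
Proof.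
rewrite (bigD1 a) //= eqxx mul1r big1 ?addr0 // => i /negbTE ->.
by rewrite mul0r.
Qed.

Lemma sumDm (j : 'I_m) (F : 'I_n -> R) : \sum_i Dm i j * F i = F (tl j) - F (hd j).
Proof.
rewrite /Dm; under eq_bigr do rewrite mulrBl.
by rewrite sumrB !sum_ind.
Qed.


Lemma same_fit (b1 b2 : 'cV[R]_m) : (forall b', f b1 <= f b') -> (forall b', f b2 <= f b') ->
  forall i, (Q *m b1) i 0 = (Q *m b2) i 0.
Proof.
move=> H1 H2.
pose a i := (Q *m b1) i 0.
pose c i := (Q *m b2) i 0.
pose mid := 2^-1 *: (b1 + b2).
have subE : forall p q (A B : 'M[R]_(p, q)) i j, (A - B) i j = A i j - B i j.
  by move=> p q A B i j; rewrite !mxE.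
have scE : forall p q (d : R) (A B : 'M[R]_(p, q)) i j, (d *: (A + B)) i j = d * (A i j + B i j).
  by move=> p q d A B i j; rewrite !mxE.
have Ea : forall i, (y - Q *m b1) i 0 = y i 0 - a i by move=> i; rewrite subE.
have Ec : forall i, (y - Q *m b2) i 0 = y i 0 - c i by move=> i; rewrite subE.
have Em : forall i, (y - Q *m mid) i 0 = y i 0 - (a i + c i) / 2.
  move=> i; rewrite subE /mid -scalemxAr mulmxDr scE /a /c; by field.
have Lm : \sum_k `|mid k 0| <= (\sum_k `|b1 k 0| + \sum_k `|b2 k 0|) / 2.
  rewrite -big_split mulr_suml; apply: ler_sum => k _ /=; rewrite !mxE.
  rewrite normrM normfV (gtr0_norm (_ : (0:R) < 2)) //.
  have := ler_normD (b1 k 0) (b2 k 0); lra.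
have f1 : f b1 = 2^-1 * \sum_i (y i 0 - a i) ^+ 2 + lam * \sum_k `|b1 k 0|.
  by rewrite /lasso_obj; congr (_ * _ + _); apply: eq_bigr => i _; rewrite Ea.
have f2 : f b2 = 2^-1 * \sum_i (y i 0 - c i) ^+ 2 + lam * \sum_k `|b2 k 0|.
  by rewrite /lasso_obj; congr (_ * _ + _); apply: eq_bigr => i _; rewrite Ec.
have fm : f mid = 2^-1 * \sum_i (y i 0 - (a i + c i) / 2) ^+ 2 + lam * \sum_k `|mid k 0|.
  by rewrite /lasso_obj; congr (_ * _ + _); apply: eq_bigr => i _; rewrite Em.
have Sq : \sum_i (y i 0 - (a i + c i) / 2) ^+ 2 + (\sum_i (a i - c i) ^+ 2) / 4
    = (\sum_i (y i 0 - a i) ^+ 2 + \sum_i (y i 0 - c i) ^+ 2) / 2.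
  rewrite mulr_suml -big_split /= -big_split /= mulr_suml; apply: eq_bigr => i _ /=; by field.
have Lm' : lam * \sum_k `|mid k 0| <= (lam * \sum_k `|b1 k 0| + lam * \sum_k `|b2 k 0|) / 2.
  by rewrite -mulrDr -mulrA ler_pM2l.
have S0 : 0 <= \sum_i (a i - c i) ^+ 2 by apply: sumr_ge0 => i _; exact: sqr_ge0.
have h1 := H1 mid; have h2 := H1 b2; have h3 := H2 b1.
have S00 : \sum_i (a i - c i) ^+ 2 = 0.
  apply/le_anti; rewrite S0 andbT.
  move: h1 h2 h3 Sq Lm'; rewrite f1 f2 fm; lra.
move=> i; have := @psumr_eq0P _ _ xpredT (fun i => (a i - c i) ^+ 2) (fun i _ => sqr_ge0 _) S00 i isT.
by move/eqP; rewrite sqrf_eq0 subr_eq0 => /eqP.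
Qed.

Section KKT.
Variables (beta : 'cV[R]_m) (r : 'I_n -> R).
Hypothesis Hopt : forall b', f beta <= f b'.
Hypothesis Hr : forall v, r v = (y - Q *m beta) v 0.

Definition G j := \sum_i Q i j * r i.
Definition C j := \sum_i Q i j ^+ 2.

Lemma GE j : G j = (r (tl j) - r (hd j)) / w j.
Proof.
rewrite /G; under eq_bigr do rewrite Qij mulrAC.
by rewrite -mulr_suml sumDm.
Qed.

Lemma expand j e :
  f (beta + e *: delta_mx j 0) - f beta
  = - (e * G j) + e ^+ 2 * C j / 2 + lam * (`|beta j 0 + e| - `|beta j 0|).
Proof.
rewrite /lasso_obj.
have E1 : forall i, (y - Q *m (beta + e *: delta_mx j 0)) i 0 = r i - e * Q i j.
  move=> i; rewrite Hr mulmxDr -scalemxAr -colE !mxE; ring.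
have E2 : forall i, (y - Q *m beta) i 0 = r i by move=> i; rewrite Hr.
under eq_bigr do rewrite E1.
under [X in _ - (_ * X + _)]eq_bigr do rewrite E2.
have E3 : \sum_i (r i - e * Q i j) ^+ 2
    = \sum_i r i ^+ 2 - 2 * e * G j + e ^+ 2 * C j.
  rewrite /G /C mulr_sumr mulr_sumr -sumrB -big_split /=.
  by apply: eq_bigr => i _; ring.
have E4 : \sum_k `|(beta + e *: delta_mx j 0) k 0|
    = \sum_k `|beta k 0| + (`|beta j 0 + e| - `|beta j 0|).
  rewrite (bigD1 j) //= [X in _ = X + _](bigD1 j) //= !mxE eqxx mulr1.
  have -> : \sum_(i < m | i != j) `|(beta + e *: delta_mx j 0) i 0|
      = \sum_(i < m | i != j) `|beta i 0|.
    by apply: eq_bigr => i /negbTE ij; rewrite !mxE ij mulr0 addr0.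
  ring.
rewrite E3 E4; by field.
Qed.

Lemma kkt0 j e : e * G j <= e ^+ 2 * C j / 2 + lam * (`|beta j 0 + e| - `|beta j 0|).
Proof.
have := Hopt (beta + e *: delta_mx j 0).
rewrite -subr_ge0 expand; lra.
Qed.

Lemma C_ge0 j : 0 <= C j.
Proof. by apply: sumr_ge0 => i _; rewrite sqr_ge0. Qed.

Lemma lim0 (a c d : R) : 0 < d -> 0 <= c ->
  (forall e, 0 < e -> e < d -> a <= e * c) -> a <= 0.
Proof.
move=> d0 c0 H; rewrite leNgt; apply/negP => a0.
pose mm := Num.min d (a / (c + 1)).
have c1 : 0 < c + 1 by lra.
have mm0 : 0 < mm by rewrite lt_min d0 divr_gt0.
have mmd : mm <= d by rewrite ge_min lexx.
have mma : mm * (c + 1) <= a.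
  by rewrite -ler_pdivlMr // ge_min lexx orbT.
have := H (mm / 2); rewrite divr_gt0 // => /(_ isT).
have -> : mm / 2 < d by lra.
move=> /(_ isT); nra.
Qed.

Lemma kkt_le j : `|G j| <= lam.
Proof.
rewrite ler_norml; apply/andP; split.
  suff : - G j - lam <= 0 by lra.
  apply: (@lim0 _ (C j / 2) 1) => //; first by rewrite divr_ge0 ?C_ge0.
  move=> e e0 _; have := kkt0 j (- e).
  have : `|beta j 0 + - e| - `|beta j 0| <= e.
    have := ler_normD (beta j 0) (- e); rewrite normrN (gtr0_norm e0); lra.
  move=> h1 h2; have h3 : lam * (`|beta j 0 + - e| - `|beta j 0|) <= lam * e.
    by rewrite ler_pM2l.
  have h4 : e * (- G j - lam) <= e * (e * (C j / 2)).
    move: h2 h3; rewrite sqrrN; lra.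
  by move: h4; rewrite ler_pM2l.
suff : G j - lam <= 0 by lra.
apply: (@lim0 _ (C j / 2) 1) => //; first by rewrite divr_ge0 ?C_ge0.
move=> e e0 _; have := kkt0 j e.
have : `|beta j 0 + e| - `|beta j 0| <= e.
  have := ler_normD (beta j 0) e; rewrite (gtr0_norm e0); lra.
move=> h1 h2; have h3 : lam * (`|beta j 0 + e| - `|beta j 0|) <= lam * e.
  by rewrite ler_pM2l.
have h4 : e * (G j - lam) <= e * (e * (C j / 2)).
  move: h2 h3; lra.
by move: h4; rewrite ler_pM2l.
Qed.

Lemma kkt_pos j : 0 < beta j 0 -> G j = lam.
Proof.
move=> bp; apply/le_anti; rewrite (le_trans (ler_norm _) (kkt_le j)) /=.
suff : lam - G j <= 0 by lra.
apply: (@lim0 _ (C j / 2) (beta j 0)) => //; first by rewrite divr_ge0 ?C_ge0.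
move=> e e0 eb; have := kkt0 j (- e).
have be : 0 < beta j 0 + - e by lra.
rewrite (gtr0_norm bp) (gtr0_norm be).
rewrite sqrrN => h2.
have h4 : e * (lam - G j) <= e * (e * (C j / 2)) by lra.
by move: h4; rewrite ler_pM2l.
Qed.

Lemma kkt_neg j : beta j 0 < 0 -> G j = - lam.
Proof.
move=> bn; apply/le_anti; rewrite andbC.
have := kkt_le j; rewrite ler_norml => /andP[-> _] /=.
suff : G j + lam <= 0 by lra.
apply: (@lim0 _ (C j / 2) (- beta j 0)) => //; first lra.
  by rewrite divr_ge0 ?C_ge0.
move=> e e0 eb; have := kkt0 j e.
have be : beta j 0 + e < 0 by lra.
rewrite (ltr0_norm bn) (ltr0_norm be).
move=> h2.
have h4 : e * (G j + lam) <= e * (e * (C j / 2)) by lra.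
by move: h4; rewrite ler_pM2l.
Qed.

Lemma lip j : `|r (tl j) - r (hd j)| <= lam * w j.
Proof.
have := kkt_le j; rewrite GE normrM normfV (gtr0_norm (Hw j)).
by rewrite ler_pdivrMr // mulrC.
Qed.

Lemma tight_pos j : 0 < beta j 0 -> r (tl j) - r (hd j) = lam * w j.
Proof.
move/kkt_pos; rewrite GE => H.
by rewrite -H divfK // lt0r_neq0.
Qed.

Lemma tight_neg j : beta j 0 < 0 -> r (tl j) - r (hd j) = - (lam * w j).
Proof.
move/kkt_neg; rewrite GE => H.
by rewrite -mulNr -H divfK // lt0r_neq0.
Qed.

End KKT.


Section Flow.
Variables (s t : 'I_n) (Ps Pt : 'I_n -> seq 'I_n).
Hypothesis HPs : forall v, sp s v (Ps v).
Hypothesis HUs : forall v, unique_shortest_path tl hd w s v.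
Hypothesis HPt : forall v, sp t v (Pt v).
Hypothesis HUt : forall v, unique_shortest_path tl hd w t v.
Hypothesis Hys : forall v, v != s -> y v 0 <= 0.
Hypothesis Hyt : forall v, v != t -> 0 <= y v 0.
Variable r : 'I_n -> R.
Hypothesis Hlipr : forall j, `|r (tl j) - r (hd j)| <= lam * w j.

Local Notation ds := (dist s Ps).
Local Notation dt := (dist t Pt).
Definition Kt v := tightK s Ps r lam v.
Definition Lt v := tightK t Pt (fun u => - r u) lam v.

Lemma Hlipn j : `|(- r (tl j)) - (- r (hd j))| <= lam * w j.
Proof. by rewrite -opprD normrN. Qed.

Lemma K_step k c a : Kt c -> J k c a -> r c - r a = lam * w k -> Kt a /\ ds a = ds c + w k.
Proof. exact: (tight_step HPs Hlam Hlipr). Qed.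

Lemma L_step k c a : Lt c -> J k c a -> r a - r c = lam * w k -> Lt a /\ dt a = dt c + w k.
Proof. move=> Hc Hk Ht; apply: (tight_step HPt Hlam Hlipn Hc Hk); rewrite -Ht; ring. Qed.

Lemma K_s : Kt s. Proof. exact: (tightK_root HPs). Qed.
Lemma L_t : Lt t. Proof. exact: (tightK_root HPt). Qed.

Lemma Kdec v : Kt v \/ ~ Kt v.
Proof. rewrite /Kt /tightK; case: (eqVneq (r s - r v) (lam * ds v)) => [h|/eqP h]; by [left|right]. Qed.
Lemma Ldec v : Lt v \/ ~ Lt v.
Proof. rewrite /Lt /tightK; case: (eqVneq (- r t - - r v) (lam * dt v)) => [h|/eqP h]; by [left|right]. Qed.

Lemma tlhd j : tl j != hd j. Proof. exact: Hsimple.1. Qed.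
Lemma hdtl j : (hd j == tl j) = false. Proof. by rewrite eq_sym (negbTE (tlhd j)). Qed.

Lemma J_end j a b : J j a b -> ((a == tl j) || (a == hd j)) && ((b == tl j) || (b == hd j)).
Proof.
by rewrite /joins => /orP[/andP[/eqP <- /eqP <-]|/andP[/eqP <- /eqP <-]]; rewrite !eqxx ?orbT.
Qed.

Lemma Dm_end v k a b : Dm v k != 0 -> J k a b -> v = a \/ v = b.
Proof.
rewrite /Dm => H; rewrite /joins => /orP[/andP[/eqP <- /eqP <-]|/andP[/eqP <- /eqP <-]].
  case: (eqVneq v (tl k)) => [->|h1]; first by left.
  case: (eqVneq v (hd k)) => [->|h2]; first by right.
  by move: H; rewrite (negbTE h1) (negbTE h2) subrr eqxx.
case: (eqVneq v (tl k)) => [->|h1]; first by right.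
case: (eqVneq v (hd k)) => [->|h2]; first by left.
by move: H; rewrite (negbTE h1) (negbTE h2) subrr eqxx.
Qed.

Lemma Dm_nz v j : (v == tl j) || (v == hd j) -> Dm v j != 0.
Proof.
rewrite /Dm => /orP[/eqP->|/eqP->].
  by rewrite eqxx (negbTE (tlhd j)) subr0 oner_neq0.
by rewrite eqxx hdtl sub0r oppr_eq0 oner_neq0.
Qed.

Section Single.
Variable beta : 'cV[R]_m.
Hypothesis Hopt : forall b', f beta <= f b'.
Hypothesis Hr : forall v, r v = (y - Q *m beta) v 0.

Lemma rE v : r v = y v 0 - \sum_k Dm v k * beta k 0 / w k.
Proof. by rewrite Hr -zE !mxE. Qed.

Lemma flow_out j a : 0 < Dm a j * beta j 0 ->
  exists b, J j a b /\ r a - r b = lam * w j /\ Dm b j * beta j 0 < 0.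
Proof.
rewrite /Dm; case: (eqVneq a (tl j)) => [->|h1].
  rewrite ?eqxx (negbTE (tlhd j)) subr0 mul1r => bp.
  exists (hd j); split; first by rewrite /joins !eqxx.
  split; first exact: (tight_pos Hopt Hr).
  by rewrite ?eqxx hdtl sub0r mulN1r oppr_lt0.
case: (eqVneq a (hd j)) => [->|h2]; last by rewrite subrr mul0r ltxx.
rewrite sub0r mulN1r oppr_gt0 => bn.
exists (tl j); split; first by rewrite /joins !eqxx orbT.
split; first by have := tight_neg Hopt Hr bn; lra.
by rewrite ?eqxx (negbTE (tlhd j)) subr0 mul1r.
Qed.

Lemma flow_in j a : Dm a j * beta j 0 < 0 ->
  exists c, J j c a /\ r c - r a = lam * w j /\ 0 < Dm c j * beta j 0.
Proof.
rewrite /Dm; case: (eqVneq a (tl j)) => [->|h1].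
  rewrite ?eqxx (negbTE (tlhd j)) subr0 mul1r => bn.
  exists (hd j); split; first by rewrite /joins !eqxx orbT.
  split; first by have := tight_neg Hopt Hr bn; lra.
  by rewrite ?eqxx hdtl sub0r mulN1r oppr_gt0.
case: (eqVneq a (hd j)) => [->|h2]; last by rewrite subrr mul0r ltxx.
rewrite sub0r mulN1r oppr_lt0 => bp.
exists (tl j); split; first by rewrite /joins !eqxx.
split; first exact: (tight_pos Hopt Hr).
by rewrite ?eqxx (negbTE (tlhd j)) subr0 mul1r.
Qed.

Lemma exists_in a j : 0 < Dm a j * beta j 0 -> y a 0 <= r a ->
  exists k, Dm a k * beta k 0 < 0.
Proof.
move=> Hj Hy; case: (boolP [exists k, Dm a k * beta k 0 < 0]) => [/existsP[k Hk]|/existsPn H].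
  by exists k.
exfalso; move: Hy; rewrite rE (bigD1 j) //=.
have t0 : 0 < Dm a j * beta j 0 / w j by rewrite divr_gt0.
have r0 : 0 <= \sum_(k < m | k != j) Dm a k * beta k 0 / w k.
  apply: sumr_ge0 => k _; rewrite divr_ge0 ?(ltW (Hw k)) //.
  by rewrite leNgt H.
lra.
Qed.

Lemma exists_out a j : Dm a j * beta j 0 < 0 -> r a <= y a 0 ->
  exists k, 0 < Dm a k * beta k 0.
Proof.
move=> Hj Hy; case: (boolP [exists k, 0 < Dm a k * beta k 0]) => [/existsP[k Hk]|/existsPn H].
  by exists k.
exfalso; move: Hy; rewrite rE (bigD1 j) //=.
have t0 : Dm a j * beta j 0 / w j < 0 by rewrite pmulr_llt0 // invr_gt0.
have r0 : \sum_(k < m | k != j) Dm a k * beta k 0 / w k <= 0.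
  apply: sumr_le0 => k _; rewrite mulr_le0_ge0 ?invr_ge0 ?(ltW (Hw k)) //.
  by rewrite leNgt H.
lra.
Qed.

Lemma back a : (exists j, 0 < Dm a j * beta j 0) -> Kt a \/ r a < 0.
Proof.
elim/(@ind_gt r): a => a IH [j Hj].
case: (ltP (r a) (y a 0)) => Hy.
  case: (eqVneq a s) => [->|hs]; first by left; exact: K_s.
  by right; apply: lt_le_trans Hy (Hys hs).
have [k Hk] := exists_in Hj Hy.
have [c [Jc [Tc Pc]]] := flow_in Hk.
have ac : r a < r c by have := mulr_gt0 Hlam (Hw k); lra.
case: (IH c ac); first by exists k.
  by move=> Kc; left; exact: (K_step Kc Jc Tc).1.
by move=> rc; right; exact: lt_trans ac rc.
Qed.

Lemma fwd b : (exists j, Dm b j * beta j 0 < 0) -> Lt b \/ 0 < r b.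
Proof.
elim/(@ind_lt r): b => b IH [j Hj].
case: (ltP (y b 0) (r b)) => Hy.
  case: (eqVneq b t) => [->|ht]; first by left; exact: L_t.
  by right; apply: le_lt_trans (Hyt ht) Hy.
have [k Hk] := exists_out Hj Hy.
have [c [Jc [Tc Pc]]] := flow_out Hk.
have cb : r c < r b by have := mulr_gt0 Hlam (Hw k); lra.
case: (IH c cb); first by exists k.
  by move=> Lc; left; apply: (L_step Lc _ Tc).1; rewrite joinsC.
by move=> rc; right; exact: lt_trans rc cb.
Qed.

Lemma classify k : beta k 0 != 0 ->
  exists a b, J k a b /\ r a - r b = lam * w k /\ (Kt a \/ Lt b).
Proof.
move=> nz.
have [a Ha] : exists a, 0 < Dm a k * beta k 0.
  case: (ltrgtP (beta k 0) 0) => [bn|bp|b0]; last by rewrite b0 eqxx in nz.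
    exists (hd k); rewrite /Dm eqxx hdtl sub0r mulN1r oppr_gt0 //.
  by exists (tl k); rewrite /Dm eqxx (negbTE (tlhd k)) subr0 mul1r.
have [b [Jb [Tb Pb]]] := flow_out Ha.
exists a, b; split => //; split => //.
case: (back (ex_intro _ k Ha)) => [Ka|ra]; first by left.
case: (fwd (ex_intro _ k Pb)) => [Lb|rb]; first by right.
have := mulr_gt0 Hlam (Hw k); lra.
Qed.

End Single.

Section Uniq.
Variables beta1 beta2 : 'cV[R]_m.
Hypothesis Hopt1 : forall b', f beta1 <= f b'.
Hypothesis Hopt2 : forall b', f beta2 <= f b'.
Hypothesis Hr1 : forall v, r v = (y - Q *m beta1) v 0.

Lemma Hr2 v : r v = (y - Q *m beta2) v 0.
Proof.
by rewrite Hr1 [LHS]subE [RHS]subE (same_fit Hopt1 Hopt2 v).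
Qed.

Definition del k := beta1 k 0 - beta2 k 0.

Lemma cons0 v : \sum_k Dm v k * del k / w k = 0.
Proof.
have := same_fit Hopt1 Hopt2 v; rewrite !zE => E.
rewrite /del; under eq_bigr do rewrite mulrBr mulrBl.
by rewrite sumrB E subrr.
Qed.

Lemma NZ k : del k != 0 ->
  exists a b, J k a b /\ r a - r b = lam * w k /\ (Kt a \/ Lt b).
Proof.
move=> nz; case: (eqVneq (beta1 k 0) 0) => [b1|b1].
  apply: (classify Hopt2 Hr2); apply: contra nz => /eqP b2.
  by rewrite /del b1 b2 subrr.
exact: (classify Hopt1 Hr1).
Qed.

Lemma kill v j : (v == tl j) || (v == hd j) ->
  (forall k, k != j -> del k != 0 -> Dm v k != 0 -> False) -> del j = 0.
Proof.
move=> Hv H; have := cons0 v; rewrite (bigD1 j) //= big1 ?addr0.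
  move/eqP; rewrite !mulf_eq0 invr_eq0 (negbTE (Dm_nz Hv)) (gt_eqF (Hw j)) orbF /=.
  by move/eqP.
move=> k kj; case: (eqVneq (del k) 0) => [->|dk]; first by rewrite mulr0 mul0r.
case: (eqVneq (Dm v k) 0) => [->|dv]; first by rewrite !mul0r.
by case: (H k kj dk dv).
Qed.

Lemma step1 b : ~ Lt b -> forall j a, J j a b -> r a - r b = lam * w j -> Kt a -> del j = 0.
Proof.
elim/(@ind_lt r): b => b IH nLb j a Jj Tj Ka.
have [Kb Db] := K_step Ka Jj Tj.
apply: (kill (v := b)); first by case/andP: (J_end Jj).
move=> k kj dk dv; have [a' [b' [Jk [Tk KL]]]] := NZ dk.
case: (Dm_end dv Jk) => Eb.
  subst a'.
  have bb : r b' < r b by have := mulr_gt0 Hlam (Hw k); lra.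
  have nLb' : ~ Lt b'.
    by move=> Lb'; apply: nLb; apply: (L_step Lb' _ Tk).1; rewrite joinsC.
  by move: dk; rewrite (IH b' bb nLb' k b Jk Tk Kb) eqxx.
subst b'.
case: KL => [Ka'|Lb]; last by apply: nLb.
have [_ Db'] := K_step Ka' Jk Tk.
have Ea : a = a' by apply: (dist_par HPs HUs Jj Jk); rewrite -?Db -?Db'.
subst a'.
by move: kj; rewrite (joins_uniq Jj Jk) eqxx.
Qed.

Lemma step2 a : forall j b, J j a b -> r a - r b = lam * w j -> Lt b -> del j = 0.
Proof.
elim/(@ind_gt r): a => a IH j b Jj Tj Lb.
have [La Da] : Lt a /\ dt a = dt b + w j.
  by apply: (L_step Lb _ Tj); rewrite joinsC.
apply: (kill (v := a)); first by case/andP: (J_end Jj).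
move=> k kj dk dv; have [a' [b' [Jk [Tk KL]]]] := NZ dk.
case: (Dm_end dv Jk) => Ea.
  subst a'.
  case: (Ldec b') => [Lb'|nLb'].
    have [_ Da'] : Lt a /\ dt a = dt b' + w k.
      by apply: (L_step Lb' _ Tk); rewrite joinsC.
    have Eb : b = b'.
      apply: (dist_par HPt HUt (j := j) (k := k) (b := a)).
      - by rewrite joinsC.
      - by rewrite joinsC.
      - by rewrite Da.
      - by rewrite Da'.
    subst b'.
    by move: kj; rewrite (joins_uniq Jj Jk) eqxx.
  case: KL => [Ka|Lb']; last by case: nLb'.
  by move: dk; rewrite (step1 nLb' Jk Tk Ka) eqxx.
subst b'.
have aa : r a < r a' by have := mulr_gt0 Hlam (Hw k); lra.
by move: dk; rewrite (IH a' aa k a Jk Tk La) eqxx.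
Qed.

Lemma del0 k : del k = 0.
Proof.
case: (eqVneq (del k) 0) => // dk.
have [a [b [Jk [Tk KL]]]] := NZ dk.
case: (Ldec b) => [Lb|nLb]; first exact: (step2 Jk Tk Lb).
case: KL => [Ka|Lb]; last by case: nLb.
exact: (step1 nLb Jk Tk Ka).
Qed.

End Uniq.
End Flow.

End Opt.
End GraphLemmas.

Section Existence.
Local Open Scope classical_set_scope.
Lemma exist_min_rV (R : realType) m (g : 'rV[R]_m -> R) (c : R) :
  0 <= c -> continuous g ->
  (forall v : 'rV[R]_m, (exists i, c < `|v ord0 i|) -> g 0 < g v) ->
  exists v, forall v', g v <= g v'.
Proof.
move=> c0 cg hg.
pose A := [set v : 'rV[R]_m | forall i, `[- c, c]%classic (v ord0 i)].
have cA : compact A by apply: (@rV_compact _ _ (fun=> `[- c, c]%classic)) => i; exact: segment_compact.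
have A0 : A !=set0.
  by exists 0 => i /=; rewrite mxE in_itv /= oppr_le0 c0.
have [v vA vmin] := EVT_min_rV A0 cA (continuous_subspaceT cg).
exists v => v'.
case: (pselect (A v')) => Av'.
  by apply: vmin; rewrite inE.
have : exists i, c < `|v' ord0 i|.
  apply: contra_notP Av' => H i /=.
  rewrite in_itv /= -ler_norml leNgt; apply/negP => Hi; apply: H; by exists i.
move/hg => lt; apply: le_trans (ltW lt).
by apply: vmin; rewrite inE => i /=; rewrite mxE in_itv /= oppr_le0 c0.
Qed.
Section Cont.
Context {R : realType} {T : topologicalType}.
Implicit Types f g : T -> R.
Lemma cM f a : continuous f -> continuous (fun x => a * f x).
Proof. by move=> cf x; apply: cvgMl_tmp; exact: cf. Qed.
Lemma cD f g : continuous f -> continuous g -> continuous (fun x => f x + g x).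
Proof. by move=> cf cg x; apply: cvgD; [exact: cf|exact: cg]. Qed.
Lemma cB f g : continuous f -> continuous g -> continuous (fun x => f x - g x).
Proof. by move=> cf cg x; apply: cvgB; [exact: cf|exact: cg]. Qed.
Lemma cX f : continuous f -> continuous (fun x => f x ^+ 2).
Proof. by move=> cf x; apply: (@cvg_comp _ _ _ _ (fun y => y ^+ 2)); [exact: cf|exact: exprn_continuous]. Qed.
Lemma cN f : continuous f -> continuous (fun x => `|f x|).
Proof. by move=> cf x; apply: cvg_norm; exact: cf. Qed.
Lemma cS (I : finType) (F : I -> T -> R) : (forall i, continuous (F i)) ->
  continuous (fun x => \sum_i F i x).
Proof. move=> cF; apply: continuous_big; first exact: add_continuous. move=> i _; exact: cF. Qed.
End Cont.

Lemma cont_lasso (R : realType) n m (y : 'cV[R]_n) (Q : 'M[R]_(n, m)) (lam : R) :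
  continuous (fun v : 'rV[R]_m =>
    2^-1 * (\sum_i (y - Q *m v^T) i 0 ^+ 2) + lam * \sum_j `|v^T j 0|).
Proof.
have E : (fun v : 'rV[R]_m =>
    2^-1 * (\sum_i (y - Q *m v^T) i 0 ^+ 2) + lam * \sum_j `|v^T j 0|) =
   (fun v => 2^-1 * (\sum_i (y i 0 - \sum_k Q i k * v 0 k) ^+ 2) + lam * \sum_j `|v 0 j|).
  apply: funext => v; congr (_ * _ + _ * _).
    by apply: eq_bigr => i _; rewrite !mxE; congr (_ ^+ 2); congr (_ - _); apply: eq_bigr => k _; rewrite mxE.
  by apply: eq_bigr => j _; rewrite mxE.
rewrite E.
have cc : forall i j, continuous (fun v : 'rV[R]_m => v i j) by move=> i j; exact: coord_continuous.
apply: cD; apply: cM.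
  apply: cS => i; apply: cX; apply: cB => //; first exact: cst_continuous.
  by apply: cS => k; apply: cM.
by apply: cS => k; apply: cN.
Qed.

End Existence.

Lemma lasso_exists (R : realType) n m (tl hd : 'I_m -> 'I_n) (w : 'I_m -> R)
  (y : 'cV[R]_n) (lam : R) : 0 < lam ->
  exists b, forall b', lasso_obj tl hd w y lam b <= lasso_obj tl hd w y lam b'.
Proof.
move=> Hlam.
pose f := lasso_obj tl hd w y lam.
pose g := fun v : 'rV[R]_m => f v^T.
have f0 : 0 <= f 0.
  rewrite /f /lasso_obj; apply: addr_ge0.
    by apply: mulr_ge0; [rewrite invr_ge0 | apply: sumr_ge0 => i _; exact: sqr_ge0].
  by apply: mulr_ge0; [exact: ltW | apply: sumr_ge0 => i _].
have [v Hv] : exists v, forall v', g v <= g v'.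
  apply: (@exist_min_rV _ _ g (f 0 / lam)).
  - by rewrite divr_ge0 // ltW.
  - exact: cont_lasso.
  - move=> v [i Hi]; rewrite /g trmx0.
    have Hl : f 0 < lam * `|v ord0 i|.
      by rewrite mulrC -ltr_pdivrMr.
    apply: lt_le_trans Hl _.
    rewrite /f /lasso_obj -[X in X <= _]add0r; apply: lerD.
      by apply: mulr_ge0; [rewrite invr_ge0 | apply: sumr_ge0 => k _; exact: sqr_ge0].
    rewrite ler_pM2l // (bigD1 i) //= mxE lerDl.
    by apply: sumr_ge0 => k _.
exists v^T => b'; have := Hv b'^T; by rewrite /g trmxK.
Qed.

Theorem lemma3p2 (R : realType) (n m : nat) (tl hd : 'I_m -> 'I_n)
  (w : 'I_m -> R) (s t : 'I_n) (lambda : R) :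
  simple_graph tl hd ->
  connected_graph tl hd ->
  (forall j, 0 < w j) ->
  s != t ->
  assumption_A1 tl hd w s t ->
  0 < lambda ->
  exists! beta : 'cV[R]_m,
    forall beta' : 'cV[R]_m,
      lasso_obj tl hd w (yvec R s t) lambda beta
      <= lasso_obj tl hd w (yvec R s t) lambda beta'.
Proof.
move=> Hs _ Hw _ A1 Hlam.
have [b0 Hb0] := lasso_exists tl hd w (yvec R s t) Hlam.
exists b0; split => // b' Hb'.
have HPs0 : forall v, exists p, shortest_path tl hd w s v p.
  by move=> v; have [p [Hp _]] := (A1 v).1; exists p.
have [Ps HPs] := choice HPs0.
have HPt0 : forall v, exists p, shortest_path tl hd w t v p.
  by move=> v; have [p [Hp _]] := (A1 v).2; exists p.
have [Pt HPt] := choice HPt0.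
have HUs : forall v, unique_shortest_path tl hd w s v by move=> v; exact: (A1 v).1.
have HUt : forall v, unique_shortest_path tl hd w t v by move=> v; exact: (A1 v).2.
have Hys : forall v : 'I_n, v != s -> yvec R s t v 0 <= 0.
  by move=> v /negbTE vs; rewrite mxE vs sub0r oppr_le0.
have Hyt : forall v : 'I_n, v != t -> 0 <= yvec R s t v 0.
  by move=> v /negbTE vt; rewrite mxE vt subr0.
pose r v := (yvec R s t - Qmx tl hd w *m b0) v 0.
have Hr : forall v, r v = (yvec R s t - Qmx tl hd w *m b0) v 0 by [].
have Hl := lip Hw Hlam Hb0 Hr.
apply/matrixP => k i; rewrite [i]ord1.
have := del0 Hs Hw Hlam HPs HUs HPt HUt Hys Hyt Hl Hb0 Hb' Hr k.
by rewrite /del => /eqP; rewrite subr_eq0 => /eqP.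
Qed.
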